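(* Let $M_i\subseteq B(H_i)$ and $N_i\subseteq B(K_i)$, $i=1,2$, be finite-dimensional von Neumann algebras on finite-dimensional Hilbert spaces with $M_1\cong M_2$ and $N_1\cong N_2$. Then there is a one-to-one correspondence between quantum multi-relations on the pair $(M_1,N_1)$ and quantum multi-relations on the pair $(M_2,N_2)$.
   Context: For finite-dimensional von Neumann algebras $M\subseteq B(H)$, $N\subseteq B(K)$, a quantum multi-relation on $(M,N)$ is a linear subspace $V\subseteq B(H\otimes K)$ such that (1) $V\subseteq B(H)\otimes N$; (2) $V$ is an $(M'\otimes1)$–$(M'\otimes1)$ bimodule, where $M'$ is the commutant of $M$ in $B(H)$; (3) $(1\otimes Z(N))V\subseteq V$, where $Z(N)=N\cap N'$ is the center of $N$. *)

(* Defs.v *)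
(* complex numbers C = R[i] over R : realType,
   B(C^n) = 'M[C]_n, H (x) K = C^(n*m) via mxtens (Kronecker product). *)
From HB Require Import structures.
From mathcomp Require Import all_boot all_algebra.
From mathcomp Require Import reals complex mxtens.
Set Implicit Arguments. Unset Strict Implicit. Unset Printing Implicit Defensive.
Import GRing.Theory Num.Theory.
Local Open Scope ring_scope.

Section Defs.
Variable R : realType.
Local Notation C := R[i].

Definition adjmx {n m : nat} (A : 'M[C]_(n, m)) : 'M[C]_(m, n) :=
  (map_mx Num.conj A)^T.

Definition is_vNa {n : nat} (M : {vspace 'M[C]_n}) : Prop :=
  [/\ (1%:M : 'M[C]_n) \in M,
      forall x y, x \in M -> y \in M -> x *m y \in M
    & forall x, x \in M -> adjmx x \in M].

Definition commutant {n : nat} (M : {vspace 'M[C]_n}) (a : 'M[C]_n) : Prop :=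
  forall x, x \in M -> a *m x = x *m a.

Definition center_vNa {n : nat} (N : {vspace 'M[C]_n}) (z : 'M[C]_n) : Prop :=
  z \in N /\ commutant N z.

(* The algebraic tensor product B(C^n) ⊗ N inside B(C^n ⊗ C^m),
   spanned by elementary tensors a ⊗ b with a ∈ B(C^n), b ∈ N. *)
Definition tens_full_left (n : nat) {m : nat} (N : {vspace 'M[C]_m})
  : {vspace 'M[C]_(n * m)} :=
  (\sum_(i < n) \sum_(j < n) \sum_(k < \dim N)
      <[(delta_mx i j : 'M[C]_n) *t (vbasis N)`_k]>)%VS.

Definition quantum_multi_relation {n m : nat}
  (M : {vspace 'M[C]_n}) (N : {vspace 'M[C]_m}) (V : {vspace 'M[C]_(n * m)})
  : Prop :=
  [/\ (V <= tens_full_left n N)%VS,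
      forall a v, commutant M a -> v \in V ->
        (a *t (1%:M : 'M[C]_m)) *m v \in V /\ v *m (a *t (1%:M : 'M[C]_m)) \in V
    & forall z v, center_vNa N z -> v \in V ->
        ((1%:M : 'M[C]_n) *t z) *m v \in V].

Definition vNa_iso {n1 n2 : nat}
  (M1 : {vspace 'M[C]_n1}) (M2 : {vspace 'M[C]_n2}) : Prop :=
  exists f : 'M[C]_n1 -> 'M[C]_n2,
    (forall x, x \in M1 -> f x \in M2) /\
    (forall y, y \in M2 -> exists2 x, x \in M1 & f x = y) /\
    {in M1 &, injective f} /\
    (forall a x y, x \in M1 -> y \in M1 -> f (a *: x + y) = a *: f x + f y) /\
    f 1%:M = 1%:M /\
    (forall x y, x \in M1 -> y \in M1 -> f (x *m y) = f x *m f y) /\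
    (forall x, x \in M1 -> f (adjmx x) = adjmx (f x)).

End Defs.

(* Main.v *)
Require Import Defs.
From HB Require Import structures.
From mathcomp Require Import all_boot all_algebra.
From mathcomp Require Import reals complex mxtens.
From Stdlib Require Import ProofIrrelevance.
Set Implicit Arguments. Unset Strict Implicit. Unset Printing Implicit Defensive.
Import GRing.Theory Num.Theory.
Local Open Scope ring_scope.

Section Dev.
Variable R : realType.
Local Notation C := R[i].

Lemma adjmxE n m (A : 'M[C]_(n,m)) i j : adjmx A i j = Num.conj (A j i).
Proof. by rewrite !mxE. Qed.

Lemma adjmxM n m p (A : 'M[C]_(n,m)) (B : 'M[C]_(m,p)) :
  adjmx (A *m B) = adjmx B *m adjmx A.
Proof. by rewrite /adjmx map_mxM trmx_mul. Qed.

Lemma adjmxK n m (A : 'M[C]_(n,m)) : adjmx (adjmx A) = A.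
Proof. by apply/matrixP=> i j; rewrite !adjmxE conjCK. Qed.

Lemma adjmxD n m (A B : 'M[C]_(n,m)) : adjmx (A + B) = adjmx A + adjmx B.
Proof. by apply/matrixP=> i j; rewrite !mxE rmorphD. Qed.

Lemma adjmxZ n m (c : C) (A : 'M[C]_(n,m)) :
  adjmx (c *: A) = Num.conj c *: adjmx A.
Proof. by apply/matrixP=> i j; rewrite !mxE rmorphM. Qed.

Lemma adjmx0 n m : adjmx (0 : 'M[C]_(n,m)) = 0.
Proof. by apply/matrixP=> i j; rewrite !mxE rmorph0. Qed.

Lemma adjmx_sum n m I (r : seq I) (P : pred I) (F : I -> 'M[C]_(n,m)) :
  adjmx (\sum_(i <- r | P i) F i) = \sum_(i <- r | P i) adjmx (F i).
Proof.
elim/big_rec2: _ => [|i y1 y2 _ <-]; first exact: adjmx0.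
by rewrite adjmxD.
Qed.

Lemma adjmx1 n : adjmx (1%:M : 'M[C]_n) = 1%:M.
Proof.
by apply/matrixP=> i j; rewrite !mxE rmorph_nat eq_sym.
Qed.

Lemma adjmxT m n p q (A : 'M[C]_(m,n)) (B : 'M[C]_(p,q)) :
  adjmx (A *t B) = adjmx A *t adjmx B.
Proof. by apply/matrixP=> i j; rewrite !mxE rmorphM. Qed.

Lemma tensmxDr m n p q (A : 'M[C]_(m,n)) (B B' : 'M[C]_(p,q)) :
  A *t (B + B') = A *t B + A *t B'.
Proof. by apply/matrixP=> i j; rewrite !mxE mulrDr. Qed.

Lemma tensmxZr m n p q (A : 'M[C]_(m,n)) c (B : 'M[C]_(p,q)) :
  A *t (c *: B) = c *: (A *t B).
Proof. by apply/matrixP=> i j; rewrite !mxE mulrCA. Qed.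

Lemma tensmx0r m n p q (A : 'M[C]_(m,n)) : A *t (0 : 'M[C]_(p,q)) = 0.
Proof. exact: tensmx0. Qed.

Lemma tensmx_sumr m n p q (A : 'M[C]_(m,n)) I (r : seq I) (P : pred I)
  (F : I -> 'M[C]_(p,q)) :
  A *t (\sum_(i <- r | P i) F i) = \sum_(i <- r | P i) A *t F i.
Proof.
elim/big_rec2: _ => [|i y1 y2 _ <-]; first exact: tensmx0.
by rewrite tensmxDr.
Qed.

Lemma big_mxtens p m (F : 'I_(p * m) -> C) :
  \sum_(t < p * m) F t = \sum_(k < p) \sum_(l < m) F (mxtens_index (k, l)).
Proof.
rewrite pair_big /=.
rewrite (reindex (@mxtens_index p m)) /=; last first.
  by exists (@mxtens_unindex p m) => x _; rewrite ?mxtens_indexK ?mxtens_unindexK.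
by apply: eq_bigr => [[k l]] _.
Qed.

Lemma sum_delta m (x : 'I_m) (g : 'I_m -> C) :
  \sum_(l < m) (1%:M : 'M[C]_m) x l * g l = g x.
Proof.
rewrite (bigD1 x) //= big1 => [|l nl]; first by rewrite !mxE eqxx mul1r addr0.
by rewrite !mxE eq_sym (negbTE nl) mul0r.
Qed.

Lemma sum_delta' m (x : 'I_m) (g : 'I_m -> C) :
  \sum_(l < m) g l * (1%:M : 'M[C]_m) l x = g x.
Proof.
rewrite (bigD1 x) //= big1 => [|l nl]; first by rewrite !mxE eqxx mulr1 addr0.
by rewrite !mxE (negbTE nl) mulr0.
Qed.

Definition blk p q m (v : 'M[C]_(p * m, q * m)) (i : 'I_p) (j : 'I_q) : 'M[C]_m :=
  \matrix_(k, l) v (mxtens_index (i, k)) (mxtens_index (j, l)).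

Lemma blkD p q m (v w : 'M[C]_(p * m, q * m)) i j :
  blk (v + w) i j = blk v i j + blk w i j.
Proof. by apply/matrixP=> k l; rewrite !mxE. Qed.

Lemma blkZ p q m c (v : 'M[C]_(p * m, q * m)) i j :
  blk (c *: v) i j = c *: blk v i j.
Proof. by apply/matrixP=> k l; rewrite !mxE. Qed.

Lemma blk0 p q m i j : blk (0 : 'M[C]_(p * m, q * m)) i j = 0.
Proof. by apply/matrixP=> k l; rewrite !mxE. Qed.

Lemma blk_sum p q m I (r : seq I) (P : pred I) (F : I -> 'M[C]_(p * m, q * m)) i j :
  blk (\sum_(a <- r | P a) F a) i j = \sum_(a <- r | P a) blk (F a) i j.
Proof.
elim/big_rec2: _ => [|a y1 y2 _ <-]; first exact: blk0.
by rewrite blkD.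
Qed.

Lemma blk_tens p q m (a : 'M[C]_(p, q)) (b : 'M[C]_m) i j :
  blk (a *t b) i j = a i j *: b.
Proof. by apply/matrixP=> k l; rewrite mxE tensmxE !mxE. Qed.

Lemma blk_eq p q m (v w : 'M[C]_(p * m, q * m)) :
  (forall i j, blk v i j = blk w i j) -> v = w.
Proof.
move=> H; apply/matrixP=> x y.
case: (mxtens_indexP x) => i k; case: (mxtens_indexP y) => j l.
by move: (H i j) => /matrixP/(_ k l); rewrite !mxE.
Qed.

Lemma blk_build p q m (Y : 'I_p -> 'I_q -> 'M[C]_m) a b :
  blk (\sum_(i < p) \sum_(j < q) delta_mx i j *t Y i j) a b = Y a b.
Proof.
rewrite blk_sum (bigD1 a) //=.
rewrite [X in _ + X]big1 ?addr0; last first.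
  move=> i ni; rewrite blk_sum big1 // => j _.
  by rewrite blk_tens !mxE eq_sym (negbTE ni) scale0r.
rewrite blk_sum (bigD1 b) //= [X in _ + X]big1 ?addr0; last first.
  by move=> j nj; rewrite blk_tens !mxE eqxx eq_sym (negbTE nj) andbF scale0r.
by rewrite blk_tens !mxE !eqxx scale1r.
Qed.

Lemma blk_decomp p q m (v : 'M[C]_(p * m, q * m)) :
  v = \sum_(i < p) \sum_(j < q) delta_mx i j *t blk v i j.
Proof. by apply: blk_eq => a b; rewrite blk_build. Qed.

Lemma blk_mull p1 p2 q m (A : 'M[C]_(p2, p1)) (v : 'M[C]_(p1 * m, q * m)) i j :
  blk ((A *t (1%:M : 'M[C]_m)) *m v) i j = \sum_(k < p1) A i k *: blk v k j.
Proof.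
apply/matrixP=> x y; rewrite !mxE summxE big_mxtens.
apply: eq_bigr => k _; rewrite !mxE.
under eq_bigr do rewrite tensmxE -mulrA.
by rewrite -big_distrr /= sum_delta.
Qed.

Lemma blk_mulr p q1 q2 m (B : 'M[C]_(q1, q2)) (v : 'M[C]_(p * m, q1 * m)) i j :
  blk (v *m (B *t (1%:M : 'M[C]_m))) i j = \sum_(k < q1) B k j *: blk v i k.
Proof.
apply/matrixP=> x y; rewrite !mxE summxE big_mxtens.
apply: eq_bigr => k _; rewrite !mxE.
under eq_bigr do rewrite tensmxE mulrCA.
by rewrite -big_distrr /= sum_delta'.
Qed.

Lemma blk_mulz p q m (z : 'M[C]_m) (v : 'M[C]_(p * m, q * m)) i j :
  blk (((1%:M : 'M[C]_p) *t z) *m v) i j = z *m blk v i j.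
Proof.
apply/matrixP=> x y; rewrite !mxE big_mxtens.
rewrite (bigD1 i) //= [X in _ + X]big1 ?addr0; last first.
  move=> k nk; rewrite big1 // => l _.
  by rewrite tensmxE !mxE eq_sym (negbTE nk) !mul0r.
apply: eq_bigr => l _.
by rewrite tensmxE !mxE eqxx mul1r.
Qed.

Lemma tflP p m (N : {vspace 'M[C]_m}) (v : 'M[C]_(p * m)) :
  reflect (forall i j, blk v i j \in N) (v \in tens_full_left p N).
Proof.
apply: (iffP idP).
  move=> /memv_sumP [vs Hvs ->] i j; rewrite blk_sum; apply: memv_suml => a _.
  move: (Hvs a isT) => /memv_sumP [vs2 H2 ->]; rewrite blk_sum.
  apply: memv_suml => b _.
  move: (H2 b isT) => /memv_sumP [vs3 H3 ->]; rewrite blk_sum.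
  apply: memv_suml => c _.
  move: (H3 c isT) => /vlineP [k ->]; rewrite blkZ blk_tens.
  by apply: memvZ; apply: memvZ; apply: vbasis_mem; apply: mem_nth; rewrite size_tuple.
move=> H; rewrite (blk_decomp v).
apply/memv_sumP; exists (fun i => \sum_(j < p) delta_mx i j *t blk v i j) => // i _.
apply/memv_sumP; exists (fun j => delta_mx i j *t blk v i j) => // j _.
rewrite (coord_vbasis (H i j)) tensmx_sumr.
apply/memv_sumP; exists (fun k => delta_mx i j *t
   (coord (vbasis N) k (blk v i j) *: (vbasis N)`_k)) => // k _.
by rewrite tensmxZr; apply: memvZ; apply: memv_line.
Qed.

Section PImg.
Variables (vT wT : vectType C).

Definition linon (f : vT -> wT) (U : {vspace vT}) :=
  forall c x y, x \in U -> y \in U -> f (c *: x + y) = c *: f x + f y.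

Lemma linon0 f U : linon f U -> f 0 = 0.
Proof.
move=> H; have := H 1 0 0 (mem0v U) (mem0v U).
rewrite !scale1r addr0 => /eqP.
by rewrite -subr_eq0 opprD addrA subrr sub0r oppr_eq0 => /eqP.
Qed.

Lemma linon_sum f U (I : Type) (r : seq I) (P : pred I) (c : I -> C) (x : I -> vT) :
  linon f U -> (forall i, x i \in U) ->
  f (\sum_(i <- r | P i) c i *: x i) = \sum_(i <- r | P i) c i *: f (x i).
Proof.
move=> H Hx; elim: r => [|a r IH]; first by rewrite !big_nil (linon0 H).
rewrite !big_cons; case: (P a) => //.
rewrite H ?IH // ?Hx //.
by apply: memv_suml => i _; apply: memvZ; apply: Hx.
Qed.

Definition pimg (f : vT -> wT) (U : {vspace vT}) : {vspace wT} :=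
  <<map_tuple f (vbasis U)>>%VS.

Lemma pimgP f U w : linon f U ->
  (w \in pimg f U) <-> (exists2 v, v \in U & w = f v).
Proof.
move=> H; split.
  move=> /coord_span ->.
  exists (\sum_i coord (map_tuple f (vbasis U)) i w *: (vbasis U)`_i).
    apply: memv_suml => i _; apply: memvZ; apply: vbasis_mem.
    by apply: mem_nth; rewrite size_tuple.
  rewrite (linon_sum _ _ _ H); last first.
    by move=> i; apply: vbasis_mem; apply: mem_nth; rewrite size_tuple.
  apply: eq_bigr => i _; congr (_ *: _).
  by rewrite /= (nth_map 0) // size_tuple.
move=> [v Hv ->]; rewrite (coord_vbasis Hv) (linon_sum _ _ _ H); last first.
  by move=> i; apply: vbasis_mem; apply: mem_nth; rewrite size_tuple.
apply: memv_suml => i _; apply: memvZ; apply: memv_span.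
apply: (map_f f).
by apply: mem_nth; rewrite size_tuple.
Qed.

End PImg.

Lemma sig_bij (A B : Type) (P : A -> Prop) (Q : B -> Prop) (F0 : A -> B) (G0 : B -> A) :
  (forall a, P a -> Q (F0 a)) -> (forall b, Q b -> P (G0 b)) ->
  (forall a, P a -> G0 (F0 a) = a) -> (forall b, Q b -> F0 (G0 b) = b) ->
  exists F : {a | P a} -> {b | Q b}, bijective F.
Proof.
move=> HF HG HGF HFG.
exists (fun s => exist Q (F0 (proj1_sig s)) (HF _ (proj2_sig s))).
exists (fun s => exist P (G0 (proj1_sig s)) (HG _ (proj2_sig s))).
  move=> [a Ha] /=; move: (HG _ _); rewrite HGF // => H'.
  by rewrite (proof_irrelevance _ H' Ha).
move=> [b Hb] /=; move: (HF _ _); rewrite HFG // => H'.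
by rewrite (proof_irrelevance _ H' Hb).
Qed.

Definition Psi p m1 m2 (psi : 'M[C]_m1 -> 'M[C]_m2) (v : 'M[C]_(p * m1)) : 'M[C]_(p * m2) :=
  \sum_(i < p) \sum_(j < p) delta_mx i j *t psi (blk v i j).

Lemma blk_Psi p m1 m2 psi (v : 'M[C]_(p * m1)) i j :
  blk (@Psi p m1 m2 psi v) i j = psi (blk v i j).
Proof. exact: blk_build. Qed.

Record isopair m1 m2 (N1 : {vspace 'M[C]_m1}) (N2 : {vspace 'M[C]_m2})
  (psi : 'M[C]_m1 -> 'M[C]_m2) (psi' : 'M[C]_m2 -> 'M[C]_m1) : Prop := IsoPair {
  ip_in : forall x, x \in N1 -> psi x \in N2;
  ip_in' : forall y, y \in N2 -> psi' y \in N1;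
  ip_K : forall x, x \in N1 -> psi' (psi x) = x;
  ip_K' : forall y, y \in N2 -> psi (psi' y) = y;
  ip_lin : linon psi N1;
  ip_lin' : linon psi' N2;
  ip_mul : forall x y, x \in N1 -> y \in N1 -> psi (x *m y) = psi x *m psi y;
  ip_mul' : forall x y, x \in N2 -> y \in N2 -> psi' (x *m y) = psi' x *m psi' y }.

Lemma isopair_sym m1 m2 N1 N2 psi psi' :
  @isopair m1 m2 N1 N2 psi psi' -> isopair N2 N1 psi' psi.
Proof. by case=> *; split. Qed.

Section NStep.
Variables (p m1 m2 : nat) (M : {vspace 'M[C]_p})
  (N1 : {vspace 'M[C]_m1}) (N2 : {vspace 'M[C]_m2})
  (psi : 'M[C]_m1 -> 'M[C]_m2) (psi' : 'M[C]_m2 -> 'M[C]_m1).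
Hypotheses (hN1 : is_vNa N1) (hN2 : is_vNa N2) (hI : isopair N1 N2 psi psi').
Let psi_in := ip_in hI.
Let psi'_in := ip_in' hI.
Let psiK := ip_K hI.
Let psi'K := ip_K' hI.
Let psi_lin := ip_lin hI.
Let psi'_lin := ip_lin' hI.
Let psi_mul := ip_mul hI.
Let psi'_mul := ip_mul' hI.

Lemma Psi_lin : linon (@Psi p m1 m2 psi) (tens_full_left p N1).
Proof.
move=> c x y /tflP Hx /tflP Hy; apply: blk_eq => i j.
by rewrite blkD blkZ !blk_Psi blkD blkZ psi_lin.
Qed.

Lemma Psi_tfl v : v \in tens_full_left p N1 -> Psi psi v \in tens_full_left p N2.
Proof. by move=> /tflP H; apply/tflP => i j; rewrite blk_Psi; apply: psi_in. Qed.

Lemma PsiK v : v \in tens_full_left p N1 -> Psi psi' (Psi psi v) = v.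
Proof. by move=> /tflP H; apply: blk_eq => i j; rewrite !blk_Psi psiK. Qed.

Lemma qmr_Psi V : quantum_multi_relation M N1 V ->
  quantum_multi_relation M N2 (pimg (Psi psi) V).
Proof.
move=> [HV Hbi Hz].
have linV : linon (Psi psi) V.
  by move=> c x y Hx Hy; apply: Psi_lin; apply: (subvP HV).
split.
- apply/subvP => w /(pimgP _ linV) [v Hv ->].
  by apply: Psi_tfl; apply: (subvP HV).
- move=> a w Ha /(pimgP _ linV) [v Hv ->].
  have /tflP Hb := subvP HV _ Hv.
  have [H1 H2] := Hbi a v Ha Hv.
  split; apply/(pimgP _ linV).
    exists ((a *t 1%:M) *m v) => //; apply: blk_eq => i j.
    rewrite blk_mull blk_Psi blk_mull (linon_sum _ _ _ psi_lin) //.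
    by apply: eq_bigr => k _; rewrite blk_Psi.
  exists (v *m (a *t 1%:M)) => //; apply: blk_eq => i j.
  rewrite blk_mulr blk_Psi blk_mulr (linon_sum _ _ _ psi_lin) //.
  by apply: eq_bigr => k _; rewrite blk_Psi.
- move=> z w [Hz1 Hz2] /(pimgP _ linV) [v Hv ->].
  have /tflP Hb := subvP HV _ Hv.
  have [h1 h2 h3] := hN1; have [g1 g2 g3] := hN2.
  have zc : center_vNa N1 (psi' z).
    split; first exact: psi'_in.
    move=> x Hx; rewrite -[x in psi' z *m x]psiK // -[x in _ = x *m _]psiK //.
    by rewrite -!psi'_mul ?psi_in // Hz2 ?psi_in.
  apply/(pimgP _ linV); exists ((1%:M *t psi' z) *m v); first exact: Hz.
  apply: blk_eq => i j.
  by rewrite blk_mulz !blk_Psi blk_mulz psi_mul ?psi'K ?psi'_in.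
Qed.

End NStep.

Lemma NStep_bij p m1 m2 (M : {vspace 'M[C]_p})
  (N1 : {vspace 'M[C]_m1}) (N2 : {vspace 'M[C]_m2}) psi psi' :
  is_vNa N1 -> is_vNa N2 -> isopair N1 N2 psi psi' ->
  exists F : {V | quantum_multi_relation M N1 V} -> {V | quantum_multi_relation M N2 V},
    bijective F.
Proof.
move=> hN1 hN2 hI; have hI' := isopair_sym hI.
have GF : forall m1 m2 (N1 : {vspace 'M[C]_m1}) (N2 : {vspace 'M[C]_m2}) psi psi',
    is_vNa N1 -> is_vNa N2 -> isopair N1 N2 psi psi' ->
    forall V, quantum_multi_relation M N1 V ->
    pimg (Psi psi') (pimg (@Psi p m1 m2 psi) V) = V.
  move=> k1 k2 K1 K2 f f' hK1 hK2 hJ V HV.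
  have hJ' := isopair_sym hJ.
  have HW := qmr_Psi hK1 hK2 hJ HV.
  have [HW1 _ _] := HW; have [HV1 _ _] := HV.
  have lin0 : linon (Psi f) V.
    by move=> c x y Hx Hy; apply: Psi_lin hJ _ _ _ _ _; apply: (subvP HV1).
  have lin1 : linon (Psi f') (pimg (Psi f) V).
    by move=> c x y Hx Hy; apply: Psi_lin hJ' _ _ _ _ _; apply: (subvP HW1).
  apply/vspaceP => w; apply/idP/idP.
    move=> /(pimgP _ lin1) [u /(pimgP _ lin0) [v Hv ->] ->].
    by rewrite (PsiK hJ) //; apply: (subvP HV1).
  move=> Hw; apply/(pimgP _ lin1); exists (Psi f w).
    by apply/(pimgP _ lin0); exists w.
  by rewrite (PsiK hJ) //; apply: (subvP HV1).
apply: (sig_bij (F0 := pimg (Psi psi)) (G0 := pimg (Psi psi'))).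
- by move=> V HV; apply: qmr_Psi hN1 hN2 hI V HV.
- by move=> W HW; apply: qmr_Psi hN2 hN1 hI' W HW.
- by move=> V HV; apply: GF hN1 hN2 hI V HV.
- by move=> W HW; apply: GF hN2 hN1 hI' W HW.
Qed.
Definition LA m p q (A : 'M[C]_(p, q)) : 'M[C]_(p * m, q * m) :=
  A *t (1%:M : 'M[C]_m).

Lemma LA_mul m p q r (A : 'M[C]_(p, q)) (B : 'M[C]_(q, r)) :
  LA m A *m LA m B = LA m (A *m B).
Proof. by rewrite /LA tensmx_mul mul1mx. Qed.

Lemma LA_adj m p q (A : 'M[C]_(p, q)) : adjmx (LA m A) = LA m (adjmx A).
Proof. by rewrite /LA adjmxT adjmx1. Qed.

Lemma LA_add m p q (A B : 'M[C]_(p, q)) : LA m (A + B) = LA m A + LA m B.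
Proof. by apply/matrixP=> i j; rewrite !mxE mulrDl. Qed.

Lemma LA0 m p q : LA m (0 : 'M[C]_(p, q)) = 0.
Proof. exact: tens0mx. Qed.

Lemma LA_sum m p q I (r : seq I) (P : pred I) (F : I -> 'M[C]_(p, q)) :
  LA m (\sum_(i <- r | P i) F i) = \sum_(i <- r | P i) LA m (F i).
Proof.
elim/big_rec2: _ => [|i y1 y2 _ <-]; first exact: LA0.
by rewrite LA_add.
Qed.

Lemma LA_scale m p q c (A : 'M[C]_(p, q)) : LA m (c *: A) = c *: LA m A.
Proof. by apply/matrixP=> i j; rewrite !mxE mulrA. Qed.

Lemma LA1 m p : LA m (1%:M : 'M[C]_p) = 1%:M.
Proof.
apply/matrixP=> x y.
case: (mxtens_indexP x) => i k; case: (mxtens_indexP y) => j l.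
rewrite /LA tensmxE !mxE (can_eq (@mxtens_indexK p m)) xpair_eqE.
by rewrite -natrM mulnb.
Qed.

Lemma LA_z m p q (A : 'M[C]_(p, q)) (z : 'M[C]_m) :
  (1%:M *t z) *m LA m A = LA m A *m (1%:M *t z).
Proof. by rewrite /LA !tensmx_mul !mul1mx !mulmx1. Qed.

Lemma tfl_mull m p (N : {vspace 'M[C]_m}) (A : 'M[C]_p) w :
  w \in tens_full_left p N -> LA m A *m w \in tens_full_left p N.
Proof.
move=> /tflP H; apply/tflP => i j; rewrite blk_mull.
by apply: memv_suml => k _; apply: memvZ.
Qed.

Lemma tfl_mulr m p (N : {vspace 'M[C]_m}) (A : 'M[C]_p) w :
  w \in tens_full_left p N -> w *m LA m A \in tens_full_left p N.
Proof.
move=> /tflP H; apply/tflP => i j; rewrite blk_mulr.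
by apply: memv_suml => k _; apply: memvZ.
Qed.

Lemma tfl_conj m p q (N : {vspace 'M[C]_m}) (A : 'M[C]_(p, q)) (B : 'M[C]_(q, p)) w :
  w \in tens_full_left q N -> LA m A *m w *m LA m B \in tens_full_left p N.
Proof.
move=> /tflP H; apply/tflP => i j; rewrite blk_mulr.
apply: memv_suml => k _; apply: memvZ; rewrite blk_mull.
by apply: memv_suml => l _; apply: memvZ.
Qed.

Lemma tfl_z m p (N : {vspace 'M[C]_m}) z w : is_vNa N -> z \in N ->
  w \in tens_full_left p N -> ((1%:M : 'M[C]_p) *t z) *m w \in tens_full_left p N.
Proof.
move=> [_ hm _] hz /tflP H; apply/tflP => i j; rewrite blk_mulz.
exact: hm.
Qed.

Definition fhom m p q (A B : 'M[C]_(p, q)) : 'Hom('M[C]_(p * m), 'M[C]_(q * m)) :=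
  linfun (mulmxr (LA m B) \o mulmx (adjmx (LA m A))).

Lemma fhomE m p q (A B : 'M[C]_(p, q)) w :
  fhom m A B w = adjmx (LA m A) *m w *m LA m B.
Proof. by rewrite lfunE. Qed.

Lemma mem_bigcapP (vT : vectType C) (I : finType) (U : I -> {vspace vT}) w :
  reflect (forall i, w \in U i) (w \in (\bigcap_i U i)%VS).
Proof.
apply: (iffP idP).
  by rewrite memvE => /subv_bigcapP H i; rewrite memvE; apply: H.
by move=> H; rewrite memvE; apply/subv_bigcapP => i _; rewrite -memvE.
Qed.

Definition FL (I : finType) m p q (N : {vspace 'M[C]_m}) (L : I -> 'M[C]_(p, q))
  (V : {vspace 'M[C]_(q * m)}) : {vspace 'M[C]_(p * m)} :=
  (tens_full_left p N :&: \bigcap_(ab : I * I) (fhom m (L ab.1) (L ab.2) @^-1: V))%VS.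

Lemma FLP (I : finType) m p q (N : {vspace 'M[C]_m}) (L : I -> 'M[C]_(p, q)) V w :
  w \in FL N L V <->
  w \in tens_full_left p N /\
  (forall a b, adjmx (LA m (L a)) *m w *m LA m (L b) \in V).
Proof.
rewrite /FL memv_cap; split.
  move=> /andP [H1 /mem_bigcapP H2]; split => // a b.
  by move: (H2 (a, b)); rewrite -memv_preim fhomE.
move=> [H1 H2]; rewrite H1 /=; apply/mem_bigcapP => [[a b]].
by rewrite -memv_preim fhomE.
Qed.

Section MStep.
Variables (n1 n2 m : nat) (M1 : {vspace 'M[C]_n1}) (M2 : {vspace 'M[C]_n2})
  (N : {vspace 'M[C]_m}) (phi : 'M[C]_n1 -> 'M[C]_n2).
Hypotheses (hM1 : is_vNa M1) (hN : is_vNa N)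
  (phi_in : forall x, x \in M1 -> phi x \in M2)
  (phi_adj : forall x, x \in M1 -> phi (adjmx x) = adjmx (phi x)).

Definition Tw (A : 'M[C]_(n2, n1)) := forall x, x \in M1 -> A *m x = phi x *m A.

Lemma tw_adj A : Tw A -> forall x, x \in M1 -> adjmx A *m phi x = x *m adjmx A.
Proof.
move=> hA x hx; have [_ _ hadj] := hM1.
have := hA _ (hadj _ hx); rewrite phi_adj // => /(congr1 (@adjmx R _ _)).
by rewrite !adjmxM !adjmxK.
Qed.

Lemma comm1 A B c : Tw A -> Tw B -> (forall x, x \in M1 -> c *m phi x = phi x *m c) ->
  commutant M1 (adjmx A *m c *m B).
Proof.
move=> hA hB hc x hx.
by rewrite -!mulmxA hB // !mulmxA -[_ *m c *m _]mulmxA hc // mulmxA tw_adj.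
Qed.

Lemma comm0 A B : Tw A -> Tw B -> commutant M1 (adjmx A *m B).
Proof.
move=> hA hB; have := comm1 (c := 1%:M) hA hB.
by rewrite mulmx1; apply => x _; rewrite mul1mx mulmx1.
Qed.

Variables (I : finType) (L : I -> 'M[C]_(n2, n1)).
Hypothesis hL : forall i, Tw (L i).

Lemma qmr_FL (k : nat) (Rf Sf : 'I_k -> I) :
  \sum_(i < k) L (Rf i) *m adjmx (L (Sf i)) = 1%:M ->
  forall V, quantum_multi_relation M1 N V -> quantum_multi_relation M2 N (FL N L V).
Proof.
move=> hRS V [HV Hbi Hz].
have hRS' : \sum_(i < k) LA m (L (Rf i)) *m LA m (adjmx (L (Sf i))) = 1%:M.
  by rewrite -LA1 -hRS LA_sum; apply: eq_bigr => i _; rewrite LA_mul.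
split.
- by apply/subvP => w /FLP [].
- move=> a w ha /FLP [w1 w2].
  have hc : forall x, x \in M1 -> a *m phi x = phi x *m a.
    by move=> x hx; apply: ha; apply: phi_in.
  rewrite -[a *t 1%:M]/(LA m a).
  split; apply/FLP; split.
  + exact: tfl_mull.
  + move=> x y.
    have -> : adjmx (LA m (L x)) *m (LA m a *m w) *m LA m (L y) =
      \sum_i LA m (adjmx (L x) *m a *m L (Rf i)) *m
              (adjmx (LA m (L (Sf i))) *m w *m LA m (L y)).
      transitivity (adjmx (LA m (L x)) *m LA m a *m
        (\sum_i LA m (L (Rf i)) *m LA m (adjmx (L (Sf i)))) *m w *m LA m (L y)).
        by rewrite hRS' mulmx1 !mulmxA.
      rewrite mulmx_sumr !mulmx_suml; apply: eq_bigr => i _.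
      by rewrite !LA_adj !mulmxA !LA_mul ?mulmxA.
    apply: memv_suml => i _.
    exact: (Hbi _ _ (comm1 (hL x) (hL (Rf i)) hc) (w2 _ _)).1.
  + exact: tfl_mulr.
  + move=> x y.
    have -> : adjmx (LA m (L x)) *m (w *m LA m a) *m LA m (L y) =
      \sum_i (adjmx (LA m (L x)) *m w *m LA m (L (Rf i))) *m
              LA m (adjmx (L (Sf i)) *m a *m L y).
      transitivity (adjmx (LA m (L x)) *m w *m
        (\sum_i LA m (L (Rf i)) *m LA m (adjmx (L (Sf i)))) *m LA m a *m LA m (L y)).
        by rewrite hRS' mulmx1 !mulmxA.
      rewrite mulmx_sumr !mulmx_suml; apply: eq_bigr => i _.
      by rewrite !LA_adj !mulmxA -!LA_mul ?mulmxA.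
    apply: memv_suml => i _.
    exact: (Hbi _ _ (comm1 (hL (Sf i)) (hL y) hc) (w2 _ _)).2.
- move=> z w hz /FLP [w1 w2]; apply/FLP; split.
    by apply: tfl_z => //; case: hz.
  move=> x y.
  have -> : adjmx (LA m (L x)) *m ((1%:M *t z) *m w) *m LA m (L y) =
     (1%:M *t z) *m (adjmx (LA m (L x)) *m w *m LA m (L y)).
    by rewrite LA_adj !mulmxA LA_z.
  exact: Hz _ _ hz (w2 x y).
Qed.

Lemma FL_RT (k : nat) (Pf Qf : 'I_k -> I) (L2 : I -> 'M[C]_(n1, n2)) :
  (forall i, L2 i = adjmx (L i)) ->
  \sum_(i < k) adjmx (L (Pf i)) *m L (Qf i) = 1%:M ->
  forall V, quantum_multi_relation M1 N V -> FL N L2 (FL N L V) = V.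
Proof.
move=> hL2 hPQ V [HV Hbi Hz].
have hPQ' : \sum_(i < k) LA m (adjmx (L (Pf i))) *m LA m (L (Qf i)) = 1%:M.
  by rewrite -(LA1 m) -hPQ LA_sum; apply: eq_bigr => i _; rewrite LA_mul.
have hQP' : \sum_(i < k) LA m (adjmx (L (Qf i))) *m LA m (L (Pf i)) = 1%:M.
  rewrite -(LA1 m) -adjmx1 -hPQ adjmx_sum LA_sum; apply: eq_bigr => i _.
  by rewrite adjmxM adjmxK LA_mul.
apply/vspaceP => v; apply/idP/idP.
  move=> /FLP [v1 v2].
  have -> : v = \sum_(i < k) \sum_(j < k) adjmx (LA m (L (Pf i))) *m
      (adjmx (LA m (L2 (Qf i))) *m v *m LA m (L2 (Qf j))) *m LA m (L (Pf j)).
    transitivity ((\sum_(i < k) LA m (adjmx (L (Pf i))) *m LA m (L (Qf i))) *m v *m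
       (\sum_(j < k) LA m (adjmx (L (Qf j))) *m LA m (L (Pf j)))).
      by rewrite hPQ' hQP' mul1mx mulmx1.
    rewrite !mulmx_suml; apply: eq_bigr => i _; rewrite mulmx_sumr.
    apply: eq_bigr => j _.
    by rewrite !hL2 !LA_adj adjmxK !mulmxA.
  apply: memv_suml => i _; apply: memv_suml => j _.
  by move: (v2 (Qf i) (Qf j)) => /FLP [_ H]; apply: H.
move=> Hv; apply/FLP; split; first exact: (subvP HV).
move=> a b; apply/FLP; split.
  by rewrite LA_adj; apply: tfl_conj; apply: (subvP HV).
move=> c d.
have -> : adjmx (LA m (L c)) *m (adjmx (LA m (L2 a)) *m v *m LA m (L2 b)) *m LA m (L d)
   = LA m (adjmx (L c) *m L a) *m v *m LA m (adjmx (L b) *m L d).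
  by rewrite !hL2 !LA_adj adjmxK -!LA_mul !mulmxA.
exact: (Hbi _ _ (comm0 (hL b) (hL d)) (Hbi _ _ (comm0 (hL c) (hL a)) Hv).1).2.
Qed.

End MStep.

Lemma MStep_bij n1 n2 m (M1 : {vspace 'M[C]_n1}) (M2 : {vspace 'M[C]_n2})
  (N : {vspace 'M[C]_m}) (phi : 'M[C]_n1 -> 'M[C]_n2) (phi' : 'M[C]_n2 -> 'M[C]_n1)
  (I : finType) (L : I -> 'M[C]_(n2, n1))
  k1 (Pf Qf : 'I_k1 -> I) k2 (Rf Sf : 'I_k2 -> I) :
  is_vNa M1 -> is_vNa M2 -> is_vNa N ->
  (forall x, x \in M1 -> phi x \in M2) -> (forall y, y \in M2 -> phi' y \in M1) ->
  (forall y, y \in M2 -> phi (phi' y) = y) ->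
  (forall x, x \in M1 -> phi (adjmx x) = adjmx (phi x)) ->
  (forall y, y \in M2 -> phi' (adjmx y) = adjmx (phi' y)) ->
  (forall i, Tw M1 phi (L i)) ->
  \sum_(i < k1) adjmx (L (Pf i)) *m L (Qf i) = 1%:M ->
  \sum_(i < k2) L (Rf i) *m adjmx (L (Sf i)) = 1%:M ->
  exists F : {V | quantum_multi_relation M1 N V} -> {W | quantum_multi_relation M2 N W},
    bijective F.
Proof.
move=> hM1 hM2 hN phi_in phi'_in phiK phi_adj phi'_adj hL hPQ hRS.
pose L' := fun i => adjmx (L i).
have hL' : forall i, Tw M2 phi' (L' i).
  move=> i y hy; rewrite /L' -{1}(phiK _ hy).
  exact: (tw_adj hM1 phi_adj (hL i) (phi'_in _ hy)).
have hPQ2 : \sum_(i < k1) L' (Pf i) *m adjmx (L' (Qf i)) = 1%:M.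
  by rewrite -hPQ; apply: eq_bigr => i _; rewrite /L' adjmxK.
have hRS2 : \sum_(i < k2) adjmx (L' (Rf i)) *m L' (Sf i) = 1%:M.
  by rewrite -hRS; apply: eq_bigr => i _; rewrite /L' adjmxK.
apply: (sig_bij (F0 := FL N L) (G0 := FL N L')).
- by move=> V HV; apply: (qmr_FL hM1 hN phi_in phi_adj hL hRS HV).
- by move=> W HW; apply: (qmr_FL hM2 hN phi'_in phi'_adj hL' hPQ2 HW).
- move=> V HV; apply: (FL_RT hM1 phi_adj hL _ hPQ HV).
  by move=> i.
- move=> W HW; apply: (FL_RT hM2 phi'_adj hL' _ hRS2 HW).
  by move=> i; rewrite /L' adjmxK.
Qed.
End Dev.

Section Dev2.
Variable R : realType.
Local Notation C := R[i].
Definition vecm n (A : 'M[C]_n) : 'rV[C]_(n * n) :=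
  \row_t A (mxtens_unindex t).1 (mxtens_unindex t).2.
Definition unvec n (u : 'rV[C]_(n * n)) : 'M[C]_n :=
  \matrix_(a, b) u 0 (mxtens_index (a, b)).

Lemma vecmK n (A : 'M[C]_n) : unvec (vecm A) = A.
Proof. by apply/matrixP=> a b; rewrite !mxE mxtens_indexK. Qed.

Lemma unvec_mul n k (D : 'rV[C]_k) (B : 'M[C]_(k, n * n)) :
  unvec (D *m B) = \sum_l D 0 l *: unvec (row l B).
Proof.
apply/matrixP=> a b; rewrite mulmx_sum_row !mxE !summxE.
by apply: eq_bigr => l _; rewrite !mxE.
Qed.

Definition ip n (A B : 'M[C]_n) := \tr (A *m adjmx B).

Lemma ip_unvec n (u v : 'rV[C]_(n * n)) :
  ip (unvec u) (unvec v) = \sum_t u 0 t * Num.conj (v 0 t).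
Proof.
rewrite /ip /mxtrace big_mxtens; apply: eq_bigr => a _; rewrite !mxE.
by apply: eq_bigr => b _; rewrite !mxE.
Qed.

Lemma ip_sum_l n I (r : seq I) (P : pred I) (c : I -> C) (F : I -> 'M[C]_n) B :
  ip (\sum_(i <- r | P i) c i *: F i) B = \sum_(i <- r | P i) c i * ip (F i) B.
Proof.
rewrite /ip mulmx_suml raddf_sum; apply: eq_bigr => i _.
rewrite -scalemxAl; exact: mxtraceZ.
Qed.

Lemma ip0l n (B : 'M[C]_n) : ip 0 B = 0.
Proof. by rewrite /ip mul0mx /mxtrace big1 // => i _; rewrite mxE. Qed.

Lemma conj_tr n (A : 'M[C]_n) : Num.conj (\tr A) = \tr (adjmx A).
Proof. by rewrite /mxtrace rmorph_sum; apply: eq_bigr => i _; rewrite !mxE. Qed.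

Lemma mulmx_deltaE m1 m2 m3 (A : 'M[C]_(m1, m2)) (p : 'I_m2) (q : 'I_m3) i s :
  (A *m delta_mx p q) i s = A i p * (s == q)%:R.
Proof.
rewrite mxE (bigD1 p) //= big1 => [|u nu]; first by rewrite !mxE eqxx addr0.
by rewrite !mxE (negbTE nu) mulr0.
Qed.

Lemma mul_delta_entry m1 m2 m3 (A : 'M[C]_(m1, m2)) (p : 'I_m2) (q : 'I_m3)
   (w : 'cV[C]_m3) i : (A *m delta_mx p q *m w) i 0 = A i p * w q 0.
Proof.
rewrite mxE (bigD1 q) //= big1 => [|s ns]; first by rewrite mulmx_deltaE eqxx mulr1 addr0.
by rewrite mulmx_deltaE (negbTE ns) mulr0 mul0r.
Qed.

Lemma rownormE k (u : 'rV[C]_k) : (u *m adjmx u) 0 0 = \sum_s `|u 0 s| ^+ 2.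
Proof. by rewrite mxE; apply: eq_bigr => s _; rewrite !mxE normCK. Qed.

Lemma rownorm_ge0 k (u : 'rV[C]_k) : 0 <= (u *m adjmx u) 0 0.
Proof. by rewrite rownormE; apply: sumr_ge0 => s _; apply: exprn_ge0. Qed.

Lemma rownorm0 k (u : 'rV[C]_k) : (u *m adjmx u) 0 0 = 0 -> u = 0.
Proof.
rewrite rownormE => H; apply/rowP => s; rewrite mxE.
have Hs : `|u 0 s| ^+ 2 = 0.
  by apply: (psumr_eq0P _ H) => // t _; apply: exprn_ge0.
by move/eqP: Hs; rewrite sqrf_eq0 normr_eq0 => /eqP.
Qed.

Section KL.
Variables (n1 n2 : nat) (M1 : {vspace 'M[C]_n1}) (phi : 'M[C]_n1 -> 'M[C]_n2).
Hypotheses (hM1 : is_vNa M1) (phi_lin : linon phi M1)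
  (phi_mul : forall x y, x \in M1 -> y \in M1 -> phi (x *m y) = phi x *m phi y)
  (phi_adj : forall x, x \in M1 -> phi (adjmx x) = adjmx (phi x))
  (phi_inj : forall x y, x \in M1 -> y \in M1 -> phi x = phi y -> x = y).

Definition Bm : 'M[C]_(\dim M1, n1 * n1) :=
  \matrix_(k, t) vecm (vbasis M1)`_k 0 t.
Definition Sm := schmidt (row_base Bm).
Definition xb (k : 'I_(\rank Bm)) : 'M[C]_n1 := unvec (row k Sm).

Lemma rowBm k : row k Bm = vecm (vbasis M1)`_k.
Proof. by apply/rowP => t; rewrite !mxE. Qed.

Lemma S_eq : (Sm :=: Bm)%MS.
Proof.
apply: eqmx_trans (eq_row_base Bm).
by apply: eqmx_schmidt_free; apply: row_base_free.
Qed.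

Lemma xb_mem k : xb k \in M1.
Proof.
rewrite /xb; have := row_sub k Sm; rewrite S_eq => /submxP [D ->].
rewrite unvec_mul; apply: memv_suml => l _; apply: memvZ.
by rewrite rowBm vecmK; apply: vbasis_mem; apply: mem_nth; rewrite size_tuple.
Qed.

Lemma xb_span z : z \in M1 -> exists e : 'I_(\rank Bm) -> C, z = \sum_k e k *: xb k.
Proof.
move=> Hz.
have h1 : (vecm z <= Bm)%MS.
  apply/submxP; exists (\row_l coord (vbasis M1) l z).
  rewrite mulmx_sum_row; apply/rowP => t.
  rewrite mxE {1}(coord_vbasis Hz) summxE summxE; apply: eq_bigr => l _.
  by rewrite !mxE.
have h2 : (Bm <= Sm)%MS by rewrite S_eq.
have /submxP [E hE] := submx_trans h1 h2.
by exists (fun k => E 0 k); rewrite -(vecmK z) hE unvec_mul.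
Qed.

Lemma xb_on j k : ip (xb j) (xb k) = (j == k)%:R.
Proof.
rewrite /xb ip_unvec.
have := unitarymxP (schmidt_unitarymx (row_base Bm) (rank_leq_col Bm)).
move=> /matrixP /(_ j k); rewrite !mxE => <-.
by apply: eq_bigr => t _; rewrite !mxE.
Qed.

Lemma expand z : z \in M1 -> z = \sum_k ip z (xb k) *: xb k.
Proof.
move=> Hz; have [e He] := xb_span Hz.
rewrite {1}He; apply: eq_bigr => k _; congr (_ *: _).
rewrite He ip_sum_l (bigD1 k) //= xb_on eqxx mulr1 big1 ?addr0 // => j nj.
by rewrite xb_on (negbTE nj) mulr0.
Qed.

Definition tX (X : 'M[C]_(n2, n1)) := \sum_k phi (xb k) *m X *m adjmx (xb k).

Lemma xbM a k : a \in M1 -> a *m xb k \in M1.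
Proof. by move=> ha; case: hM1 => _ hm _; apply: hm => //; apply: xb_mem. Qed.

Lemma tX_tw X : Tw M1 phi (tX X).
Proof.
move=> a ha; have [_ hm hadj] := hM1.
have L1 : phi a *m tX X = \sum_k \sum_j
    ip (a *m xb k) (xb j) *: (phi (xb j) *m X *m adjmx (xb k)).
  rewrite /tX mulmx_sumr; apply: eq_bigr => k _.
  rewrite !mulmxA -phi_mul ?xb_mem //.
  rewrite [X in phi X](expand (xbM k ha)) (linon_sum _ _ _ phi_lin); last first.
    by move=> j; apply: xb_mem.
  rewrite !mulmx_suml; apply: eq_bigr => j _.
  by rewrite -!scalemxAl.
have L2 : tX X *m a = \sum_j \sum_k
    Num.conj (ip (adjmx a *m xb j) (xb k)) *: (phi (xb j) *m X *m adjmx (xb k)).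
  rewrite /tX mulmx_suml; apply: eq_bigr => j _; rewrite -mulmxA.
  have -> : adjmx (xb j) *m a = adjmx (adjmx a *m xb j) by rewrite adjmxM adjmxK.
  rewrite [X in adjmx X](expand (xbM j (hadj _ ha))) adjmx_sum mulmx_sumr.
  by apply: eq_bigr => k _; rewrite adjmxZ scalemxAr.
rewrite L1 L2 exchange_big; apply: eq_bigr => j _; apply: eq_bigr => k _.
congr (_ *: _); rewrite /ip conj_tr !adjmxM !adjmxK.
by rewrite mulmxA mxtrace_mulC mulmxA.

Qed.

Lemma tX_nondeg (c : 'cV[C]_n1) : (forall p q, tX (delta_mx p q) *m c = 0) -> c = 0.
Proof.
move=> H.
have Hw : forall k, adjmx (xb k) *m c = 0.
  have H2 : forall q, \sum_k (adjmx (xb k) *m c) q 0 *: xb k = 0.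
    move=> q; apply: phi_inj.
    - by apply: memv_suml => k _; apply: memvZ; apply: xb_mem.
    - exact: mem0v.
    rewrite (linon_sum _ _ _ phi_lin); last by move=> k; apply: xb_mem.
    rewrite (linon0 phi_lin); apply/matrixP => i p.
    move: (H p q) => /matrixP /(_ i 0).
    rewrite /tX mulmx_suml summxE [RHS]mxE => Hs.
    rewrite summxE [RHS]mxE; apply: (etrans _ Hs).
    apply: eq_bigr => k _; rewrite -[in RHS]mulmxA mul_delta_entry mxE.
    by rewrite mulrC.
  move=> k; apply/matrixP => q z; rewrite [z]ord1.
  have := congr1 (fun A => ip A (xb k)) (H2 q).
  rewrite /= ip_sum_l ip0l (bigD1 k) //= xb_on eqxx mulr1 big1 ?addr0.
    by move=> ->; rewrite mxE.
  by move=> j nj; rewrite xb_on (negbTE nj) mulr0.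
have [h1 _ _] := hM1.
rewrite -[c]mul1mx -adjmx1 (expand h1) adjmx_sum mulmx_suml.
by apply: big1 => k _; rewrite adjmxZ -scalemxAl Hw scaler0.
Qed.

Definition Xd (t : 'I_(n2 * n1)) : 'M[C]_(n2, n1) :=
  delta_mx (mxtens_unindex t).1 (mxtens_unindex t).2.
Definition mu := \sum_t adjmx (tX (Xd t)) *m tX (Xd t).

Lemma mu_unit : mu \in unitmx.
Proof.
rewrite unitmxE unitfE; apply/negP => /det0P [v nv hv].
have E : \sum_t ((v *m adjmx (tX (Xd t))) *m adjmx (v *m adjmx (tX (Xd t)))) 0 0 = 0.
  transitivity ((v *m mu *m adjmx v) 0 0); last by rewrite hv mul0mx mxE.
  rewrite /mu mulmx_sumr mulmx_suml summxE; apply: eq_bigr => t _.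
  by rewrite adjmxM adjmxK !mulmxA.
have Hz : forall t, v *m adjmx (tX (Xd t)) = 0.
  move=> t; apply: rownorm0; apply: (psumr_eq0P _ E) => // s _.
  exact: rownorm_ge0.
have : adjmx v = 0.
  apply: tX_nondeg => p q; have := Hz (mxtens_index (p, q)).
  rewrite /Xd mxtens_indexK /= => /(congr1 (@adjmx R _ _)).
  by rewrite adjmxM adjmxK adjmx0.
move=> /(congr1 (@adjmx R _ _)); rewrite adjmxK adjmx0 => v0.
by rewrite v0 eqxx in nv.
Qed.

Lemma mu_comm x : x \in M1 -> mu *m x = x *m mu.
Proof.
move=> hx; rewrite /mu mulmx_suml mulmx_sumr; apply: eq_bigr => t _.
by rewrite -mulmxA tX_tw // mulmxA (tw_adj hM1 phi_adj (tX_tw _) hx) mulmxA.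
Qed.

Lemma mu_adj : adjmx mu = mu.
Proof.
by rewrite /mu adjmx_sum; apply: eq_bigr => t _; rewrite adjmxM adjmxK.
Qed.

Lemma KL : exists k (P Q : 'I_k -> 'M[C]_(n2, n1)),
  [/\ forall i, Tw M1 phi (P i), forall i, Tw M1 phi (Q i) &
      \sum_i adjmx (P i) *m Q i = 1%:M].
Proof.
have hinv : forall x, x \in M1 -> invmx mu *m x = x *m invmx mu.
  move=> x hx.
  rewrite -[LHS](mulmxK mu_unit) -[invmx mu *m x *m mu]mulmxA -mu_comm //.
  by rewrite mulmxA mulVmx ?mu_unit // mul1mx.
have hadj : adjmx (invmx mu) = invmx mu.
  have h1 : adjmx (invmx mu) *m mu = 1%:M.
    by rewrite -{2}mu_adj -adjmxM mulmxV ?mu_unit // adjmx1.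
  by rewrite -[LHS]mulmx1 -(mulmxV mu_unit) mulmxA h1 mul1mx.
exists (n2 * n1), (fun t => tX (Xd t) *m invmx mu), (fun t => tX (Xd t)).
split.
- by move=> t x hx; rewrite -mulmxA hinv // !mulmxA tX_tw.
- by move=> t; apply: tX_tw.
- rewrite -(mulVmx mu_unit) /mu mulmx_sumr; apply: eq_bigr => t _.
  by rewrite adjmxM hadj mulmxA.
Qed.

End KL.

Record isoD n1 n2 (M1 : {vspace 'M[C]_n1}) (M2 : {vspace 'M[C]_n2})
  (f : 'M[C]_n1 -> 'M[C]_n2) : Prop := IsoD {
  id_in : forall x, x \in M1 -> f x \in M2;
  id_lin : linon f M1;
  id_mul : forall x y, x \in M1 -> y \in M1 -> f (x *m y) = f x *m f y;
  id_adj : forall x, x \in M1 -> f (adjmx x) = adjmx (f x);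
  id_inj : forall x y, x \in M1 -> y \in M1 -> f x = f y -> x = y }.

Lemma iso_ex n1 n2 (M1 : {vspace 'M[C]_n1}) (M2 : {vspace 'M[C]_n2}) :
  is_vNa M1 -> is_vNa M2 -> vNa_iso M1 M2 ->
  exists f g, [/\ isoD M1 M2 f, isoD M2 M1 g,
    (forall x, x \in M1 -> g (f x) = x) & (forall y, y \in M2 -> f (g y) = y)].
Proof.
move=> [_ hm1 ha1] [_ hm2 ha2] [f [H1 [H2 [H3 [H4 [H5 [H6 H7]]]]]]].
have exP : forall y, exists x, (y \notin M2) || ((x \in M1) && (f x == y)).
  move=> y; case: (boolP (y \in M2)) => hy.
    by have [x hx <-] := H2 y hy; exists x; rewrite hx eqxx orbT.
  by exists 0.
pose g y := xchoose (exP y).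
have gP : forall y, y \in M2 -> g y \in M1 /\ f (g y) = y.
  move=> y hy; move: (xchooseP (exP y)) => /orP [/negP //|/andP [a /eqP b]].
  by split.
have gK : forall x, x \in M1 -> g (f x) = x.
  move=> x hx; have [a b] := gP _ (H1 x hx); exact: H3.
exists f, g; split.
- by split.
- split.
  + by move=> y hy; case: (gP y hy).
  + move=> c y1 y2 h1 h2; have [a1 b1] := gP _ h1; have [a2 b2] := gP _ h2.
    have h3 : c *: y1 + y2 \in M2 by apply: memvD => //; apply: memvZ.
    have [a3 b3] := gP _ h3.
    apply: H3 => //; first by apply: memvD => //; apply: memvZ.
    by rewrite b3 H4 // b1 b2.
  + move=> y1 y2 h1 h2; have [a1 b1] := gP _ h1; have [a2 b2] := gP _ h2.
    have [a3 b3] := gP _ (hm2 _ _ h1 h2).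
    by apply: H3 => //; [apply: hm1 | rewrite b3 H6 // b1 b2].
  + move=> y h1; have [a1 b1] := gP _ h1.
    have [a3 b3] := gP _ (ha2 _ h1).
    by apply: H3 => //; [apply: ha1 | rewrite b3 H7 // b1].
  + move=> y1 y2 h1 h2 e; have [a1 b1] := gP _ h1; have [a2 b2] := gP _ h2.
    by rewrite -b1 -b2 e.
- exact: gK.
- by move=> y hy; case: (gP y hy).
Qed.

End Dev2.

Unset Implicit Arguments.

Theorem theorem4p3 (R : realType) (n1 n2 m1 m2 : nat)
  (M1 : {vspace 'M[R[i]]_n1}) (M2 : {vspace 'M[R[i]]_n2})
  (N1 : {vspace 'M[R[i]]_m1}) (N2 : {vspace 'M[R[i]]_m2}) :
  is_vNa M1 -> is_vNa M2 -> is_vNa N1 -> is_vNa N2 ->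
  vNa_iso M1 M2 -> vNa_iso N1 N2 ->
  exists F : {V : {vspace 'M[R[i]]_(n1 * m1)} | quantum_multi_relation M1 N1 V} ->
             {V : {vspace 'M[R[i]]_(n2 * m2)} | quantum_multi_relation M2 N2 V},
    bijective F.
Proof.
move=> hM1 hM2 hN1 hN2 iM iN.
have [psi [psi' [iD iD' K K']]] := iso_ex hN1 hN2 iN.
have [F2 bF2] : exists F : {V | quantum_multi_relation M2 N1 V} ->
    {V | quantum_multi_relation M2 N2 V}, bijective F.
  apply: (NStep_bij M2 (psi := psi) (psi' := psi') hN1 hN2).
  by split; case: iD; case: iD'.
have [phi [phi' [jD jD' J J']]] := iso_ex hM1 hM2 iM.
have [k1 [P [Q [hP hQ hPQ]]]] :=
  KL hM1 (id_lin jD) (id_mul jD) (id_adj jD) (id_inj jD).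
have [k2 [P' [Q' [hP' hQ' hPQ']]]] :=
  KL hM2 (id_lin jD') (id_mul jD') (id_adj jD') (id_inj jD').
pose L (a : ('I_k1 + 'I_k1) + ('I_k2 + 'I_k2)) : 'M[R[i]]_(n2, n1) :=
  match a with
  | inl (inl i) => P i
  | inl (inr i) => Q i
  | inr (inl i) => adjmx (P' i)
  | inr (inr i) => adjmx (Q' i)
  end.
have twadj : forall A, Tw M2 phi' A -> Tw M1 phi (adjmx A).
  move=> A hA x hx.
  have := tw_adj hM2 (id_adj jD') hA (id_in jD hx).
  by rewrite J.
have hL : forall a, Tw M1 phi (L a).
  case=> [[i|i]|[i|i]] /=; by [apply: hP | apply: hQ | apply: twadj].
have [F1 bF1] : exists F : {V | quantum_multi_relation M1 N1 V} ->
    {V | quantum_multi_relation M2 N1 V}, bijective F.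
  apply: (@MStep_bij R n1 n2 m1 M1 M2 N1 phi phi' _ L k1
     (fun i => inl (inl i)) (fun i => inl (inr i)) k2
     (fun i => inr (inl i)) (fun i => inr (inr i))) => //.
  - exact: id_in jD.
  - exact: id_in jD'.
  - exact: id_adj jD.
  - exact: id_adj jD'.
  - by rewrite -hPQ'; apply: eq_bigr => i _ /=; rewrite adjmxK.
exists (F2 \o F1); exact: bij_comp.
Qed.
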